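(* $\mathcal{OBLOT}^{F}_{\mathcal{L.V.}} \perp \mathcal{OBLOT}^{S}_{\mathcal{F.V.}}$, i.e. the model $\mathcal{OBLOT}$ under the fully synchronous scheduler with limited visibility is computationally incomparable with the model $\mathcal{OBLOT}$ under the semi-synchronous scheduler with full visibility.
   Context: Robots are anonymous, identical, autonomous computational entities viewed as points moving in the Euclidean plane. Each has its own local coordinate system, with no agreement between robots and no common chirality, and perceives itself at its origin. Robots operate in Look-Compute-Move cycles. In Look a robot takes an instantaneous snapshot of the positions of the robots it can see. In Compute it runs the common algorithm on the snapshot to obtain a destination. In Move it moves there. Model $\mathcal{OBLOT}$: robots are oblivious (no memory of previous cycles) and silent (no means of communication). Schedulers: time is divided into rounds. Under the semi-synchronous scheduler $S$ (SSYNCH), in each round an adversarially chosen set of robots is activated and they perform one full cycle in perfect synchronization; every robot is activated infinitely often. Under the fully synchronous scheduler $F$ (FSYNCH), every robot is activated in every round. Visibility: - Full visibility $\mathcal{F.V.}$: each robot sees all robots. - Limited visibility $\mathcal{L.V.}$: a robot sees only robots within a fixed distance $V_r$ (same for all robots) of its current position, and the initial visibility graph (robots adjacent iff they see each other) is connected. Relations: $\mathcal{M}^X_V$ denotes model $\mathcal{M}$ under scheduler $X$ with visibility $V$. $Task(\mathcal{M},X,V;R)$ is the set of problems solvable by team $R$ in that setting, and $\mathcal{R}$ is the set of all teams. $\mathcal{M}^{X_1}_{V_1} \perp \mathcal{N}^{X_2}_{V_2}$ means there exist $R_1,R_2\in\mathcal{R}$ with $Task(\mathcal{M},X_1,V_1;R_1)\setminus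 Task(\mathcal{N},X_2,V_2;R_1)\neq\emptyset$ and $Task(\mathcal{N},X_2,V_2;R_2)\setminus Task(\mathcal{M},X_1,V_1;R_2)\neq\emptyset$. *)

(* Defs.v *)
From Stdlib Require Import Reals Lra.
Open Scope R_scope.

Definition point := (R * R)%type.

Definition padd (p q : point) : point := (fst p + fst q, snd p + snd q).
Definition psub (p q : point) : point := (fst p - fst q, snd p - snd q).
Definition dist (p q : point) : R :=
  sqrt ((fst p - fst q) ^ 2 + (snd p - snd q) ^ 2).

(** * Local coordinate systems
    A local frame is a similarity of the plane centred at the robot:
    rotation by an arbitrary angle, arbitrary positive unit length, and an
    arbitrary handedness (no common chirality).  The matrix is
    [[a,-b],[b,a]] (direct) or [[a,b],[b,-a]] (reflected), (a,b) <> (0,0). *)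
Record frame := mkFrame {
  fa : R; fb : R; frefl : bool;
  fnz : fa <> 0 \/ fb <> 0 }.

Definition flin (f : frame) (p : point) : point :=
  let a := fa f in let b := fb f in let x := fst p in let y := snd p in
  if frefl f then (a * x + b * y, b * x - a * y)
  else (a * x - b * y, b * x + a * y).

Definition flin_inv (f : frame) (p : point) : point :=
  let a := fa f in let b := fb f in let u := fst p in let v := snd p in
  let s := a ^ 2 + b ^ 2 in
  if frefl f then ((a * u + b * v) / s, (b * u - a * v) / s)
  else ((a * u + b * v) / s, (a * v - b * u) / s).

Definition to_local (f : frame) (x p : point) : point := flin f (psub p x).
Definition to_global (f : frame) (x d : point) : point := padd x (flin_inv f d).

Record team := mkTeam {
  tn : nat; tV : R;
  tn_pos : (0 < tn)%nat; tV_pos : 0 < tV }.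

(** Robot [i] (with [i < tn]) is at [c i]. *)
Definition config := nat -> point.
Definition execution := nat -> config.

Inductive visibility := FV | LV.
Inductive scheduler := FSYNCH | SSYNCH.

Definition sees (v : visibility) (V : R) (c : config) (i j : nat) : Prop :=
  match v with FV => True | LV => dist (c i) (c j) <= V end.

Definition snapshot (v : visibility) (Rt : team) (c : config) (f : frame) (i : nat)
  : point -> Prop :=
  fun q => exists j, (j < tn Rt)%nat /\ sees v (tV Rt) c i j /\
                     q = to_local f (c i) (c j).

(** An OBLOT algorithm: oblivious, silent; destination (local coordinates)
    computed from the current snapshot only. *)
Definition algorithm := (point -> Prop) -> point.

Definition valid_schedule (s : scheduler) (n : nat) (act : nat -> nat -> bool) : Prop :=
  match s with
  | FSYNCH => forall t i, (i < n)%nat -> act t i = true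
  | SSYNCH =>
      (forall t, exists i, (i < n)%nat /\ act t i = true) /\
      (forall i, (i < n)%nat -> forall t, exists t', (t <= t')%nat /\ act t' i = true)
  end.

(** Frames are fixed per robot (chosen adversarially) for the execution. *)
Fixpoint exec (v : visibility) (Rt : team) (A : algorithm) (frames : nat -> frame)
  (act : nat -> nat -> bool) (c0 : config) (t : nat) : config :=
  match t with
  | O => c0
  | S t' =>
      let c := exec v Rt A frames act c0 t' in
      fun i => if act t' i
               then to_global (frames i) (c i) (A (snapshot v Rt c (frames i) i))
               else c i
  end.

Inductive vreach (n : nat) (V : R) (c : config) (i : nat) : nat -> Prop :=
  | vreach_refl : vreach n V c i i
  | vreach_step : forall j k, vreach n V c i j -> (k < n)%nat ->
                  dist (c j) (c k) <= V -> vreach n V c i k.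

Definition vis_connected (n : nat) (V : R) (c : config) : Prop :=
  forall i j, (i < n)%nat -> (j < n)%nat -> vreach n V c i j.

Definition admissible (Rt : team) (c : config) : Prop :=
  (forall i j, (i < tn Rt)%nat -> (j < tn Rt)%nat -> c i = c j -> i = j) /\
  vis_connected (tn Rt) (tV Rt) c.

(** * Problems
    A problem is a temporal geometric predicate on the sequence of
    configurations, insensitive to the time scale (stuttering). *)
Definition stretching (g : nat -> nat) : Prop :=
  g O = O /\ (forall t, g (S t) = g t \/ g (S t) = S (g t)) /\
  (forall m, exists t, g t = m).

Record problem := mkProblem {
  holds : execution -> Prop;
  holds_stutter : forall e g, stretching g -> (holds e <-> holds (fun t => e (g t))) }.

Definition solvable (s : scheduler) (v : visibility) (Rt : team) (P : problem) : Prop :=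
  exists A : algorithm,
    forall (c0 : config), admissible Rt c0 ->
    forall (frames : nat -> frame) (act : nat -> nat -> bool),
      valid_schedule s (tn Rt) act ->
      holds P (exec v Rt A frames act c0).

Definition incomparable (s1 : scheduler) (v1 : visibility)
                        (s2 : scheduler) (v2 : visibility) : Prop :=
  (exists (R1 : team) (P : problem), solvable s1 v1 R1 P /\ ~ solvable s2 v2 R1 P) /\
  (exists (R2 : team) (P : problem), solvable s2 v2 R2 P /\ ~ solvable s1 v1 R2 P).

(* Main.v *)
Require Import Defs.
From Stdlib Require Import Reals.
From Stdlib Require Import Lra Lia ClassicalEpsilon FunctionalExtensionality PropExtensionality.
Require Import Defs.
Open Scope R_scope.

Definition d2 (p q : point) : R := (fst p - fst q) ^ 2 + (snd p - snd q) ^ 2.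

Lemma dist_le1 p q : dist p q <= 1 <-> d2 p q <= 1.
Proof.
  unfold dist. fold (d2 p q). assert (H0 : 0 <= d2 p q) by (unfold d2; apply Rplus_le_le_0_compat; apply pow2_ge_0).
  split; intro H.
  - apply sqrt_le_0; try lra. rewrite sqrt_1. exact H.
  - rewrite <- sqrt_1. apply sqrt_le_1_alt. exact H.
Qed.

Lemma exec_S v Rt A fr act c0 t i :
  exec v Rt A fr act c0 (S t) i =
  if act t i then to_global (fr i) (exec v Rt A fr act c0 t i)
                    (A (snapshot v Rt (exec v Rt A fr act c0 t) (fr i) i))
  else exec v Rt A fr act c0 t i.
Proof. reflexivity. Qed.

Lemma move1 f x : to_global f x (1,0) <> x.
Proof.
  destruct x as [x1 x2]. destruct f as [a b r Hnz].
  unfold to_global, padd, flin_inv; simpl.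
  assert (Hs : a * (a * 1) + b * (b * 1) > 0) by (destruct Hnz; nra).
  intro H. destruct r; simpl in H; injection H; intros H2 H1.
  - assert (Ha : (a * 1 + b * 0) / (a * (a * 1) + b * (b * 1)) = 0) by lra.
    assert (Hb : (b * 1 - a * 0) / (a * (a * 1) + b * (b * 1)) = 0) by lra.
    unfold Rdiv in Ha, Hb.
    apply Rmult_integral in Ha; apply Rmult_integral in Hb.
    destruct Ha as [Ha|Ha]; [|apply Rinv_neq_0_compat in Ha; lra].
    destruct Hb as [Hb|Hb]; [|apply Rinv_neq_0_compat in Hb; lra].
    destruct Hnz; lra.
  - assert (Ha : (a * 1 + b * 0) / (a * (a * 1) + b * (b * 1)) = 0) by lra.
    assert (Hb : (a * 0 - b * 1) / (a * (a * 1) + b * (b * 1)) = 0) by lra.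
    unfold Rdiv in Ha, Hb.
    apply Rmult_integral in Ha; apply Rmult_integral in Hb.
    destruct Ha as [Ha|Ha]; [|apply Rinv_neq_0_compat in Ha; lra].
    destruct Hb as [Hb|Hb]; [|apply Rinv_neq_0_compat in Hb; lra].
    destruct Hnz; lra.
Qed.

Lemma stay0 f x : to_global f x (0,0) = x.
Proof.
  destruct x as [x1 x2]. destruct f as [a b r Hnz].
  unfold to_global, padd, flin_inv; simpl. destruct r; simpl; f_equal; unfold Rdiv; ring.
Qed.

Lemma stretch_back g t : stretching g -> forall s, (S t <= g s)%nat ->
  exists s', g s' = t /\ g (S s') = S t.
Proof.
  intros [H0 [Hs _]]. induction s as [|s IH]; intro H.
  - rewrite H0 in H; lia.
  - destruct (Compare_dec.le_lt_dec (S t) (g s)) as [Hl|Hl]; [apply IH; exact Hl|].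
    exists s. destruct (Hs s); lia.
Qed.

Definition team2 : team := mkTeam 2 1 ltac:(lia) ltac:(lra).

Definition hold1 (e : execution) : Prop :=
  (exists t, e t 0%nat <> e O 0%nat) /\
  forall t, (e (S t) 0%nat = e t 0%nat /\ e (S t) 1%nat = e t 1%nat) \/
            (e (S t) 0%nat <> e t 0%nat /\ e (S t) 1%nat <> e t 1%nat).

Lemma hold1_stutter : forall e g, stretching g -> (hold1 e <-> hold1 (fun t => e (g t))).
Proof.
  intros e g Hg. pose proof Hg as [H0 [Hs Hsur]]. unfold hold1. split.
  - intros [[t Ht] Hall]. split.
    + destruct (Hsur t) as [s Hst]. exists s. rewrite H0, Hst. exact Ht.
    + intro s. destruct (Hs s) as [E|E]; rewrite E.
      * left; split; reflexivity.
      * apply Hall.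
  - intros [[t Ht] Hall]. split.
    + exists (g t). rewrite H0 in Ht. exact Ht.
    + intro t0. destruct (Hsur (S t0)) as [s Hst].
      destruct (stretch_back g t0 Hg s ltac:(lia)) as [s' [E1 E2]].
      specialize (Hall s'). rewrite E1, E2 in Hall. exact Hall.
Qed.

Definition P1 : problem := mkProblem hold1 hold1_stutter.

Definition id0 : frame := mkFrame 1 0 false (or_introl R1_neq_R0).

Lemma dir1_yes : solvable FSYNCH LV team2 P1.
Proof.
  exists (fun _ => (1,0)). intros c0 _ fr act Hact. simpl in Hact.
  assert (Hm : forall t i, (i < 2)%nat ->
     exec LV team2 (fun _ => (1,0)) fr act c0 (S t) i <> exec LV team2 (fun _ => (1,0)) fr act c0 t i).
  { intros t i Hi. rewrite exec_S, (Hact t i Hi). apply move1. }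
  split.
  - exists 1%nat. apply Hm. lia.
  - intro t. right. split; apply Hm; lia.
Qed.

Definition c2 : config := fun i => match i with O => (0,0) | _ => (1,0) end.

Lemma dir1_no : ~ solvable SSYNCH FV team2 P1.
Proof.
  intros [A HA].
  set (act := fun t i : nat => if Nat.even t then Nat.eqb i 0 else Nat.eqb i 1).
  assert (Hadm : admissible team2 c2).
  { split.
    - intros i j Hi Hj E. simpl in Hi, Hj.
      destruct i as [|[|i]]; destruct j as [|[|j]]; try lia; simpl in E;
        injection E; lra.
    - intros i j Hi Hj. simpl in Hi, Hj.
      assert (D : dist (c2 0%nat) (c2 1%nat) <= 1 /\ dist (c2 1%nat) (c2 0%nat) <= 1).
      { split; apply dist_le1; unfold d2; simpl; lra. }
      destruct i as [|[|i]]; destruct j as [|[|j]]; try lia; try apply vreach_refl.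
      + eapply vreach_step; [apply vreach_refl| simpl; lia | apply D].
      + eapply vreach_step; [apply vreach_refl| simpl; lia | apply D]. }
  assert (Hval : valid_schedule SSYNCH (tn team2) act).
  { split.
    - intro t. unfold act. destruct (Nat.even t).
      + exists 0%nat; simpl; split; [lia|reflexivity].
      + exists 1%nat; simpl; split; [lia|reflexivity].
    - intros i Hi t. simpl in Hi. destruct i as [|[|i]]; try lia.
      + exists (2 * t)%nat. split; [lia|]. unfold act. rewrite Nat.even_mul. reflexivity.
      + exists (S (2 * t))%nat. split; [lia|]. unfold act.
        rewrite Nat.even_succ, <- Nat.negb_even, Nat.even_mul. reflexivity. }
  specialize (HA c2 Hadm (fun _ => id0) act Hval).
  destruct HA as [[t Ht] Hall]. apply Ht. clear Ht.
  set (e := exec FV team2 A (fun _ => id0) act c2) in *.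
  assert (K : forall t, e t 0%nat = e O 0%nat /\ e t 1%nat = e O 1%nat).
  { induction t0 as [|t0 IH]; [split; reflexivity|].
    destruct (Hall t0) as [[E0 E1]|[N0 N1]].
    - rewrite E0, E1. exact IH.
    - exfalso. unfold act in *. destruct (Nat.even t0) eqn:Ev.
      + apply N1. unfold e. rewrite exec_S. unfold act. rewrite Ev. reflexivity.
      + apply N0. unfold e. rewrite exec_S. unfold act. rewrite Ev. reflexivity. }
  apply K.
Qed.


Definition team4 : team := mkTeam 4 1 ltac:(lia) ltac:(lra).

Definition typeA (c : config) : Prop :=
  c 0%nat = (0,0) /\ c 1%nat = (1,0) /\ c 2%nat = (2,0) /\ c 3%nat = (3,0).
Definition typeB (c : config) : Prop :=
  c 0%nat = (0,0) /\ c 1%nat = (1,0) /\ c 2%nat = (2,0) /\ c 3%nat = (5/2,0).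

Definition hold2 (e : execution) : Prop :=
  (typeA (e O) -> exists t i, (i < 4)%nat /\ e t i <> e O i) /\
  (typeB (e O) -> forall t i, (i < 4)%nat -> e t i = e O i).

Lemma hold2_stutter : forall e g, stretching g -> (hold2 e <-> hold2 (fun t => e (g t))).
Proof.
  intros e g Hg. pose proof Hg as [H0 [Hs Hsur]]. unfold hold2. rewrite H0. split.
  - intros [HA HB]. split.
    + intro TA. destruct (HA TA) as [t [i [Hi Ht]]]. destruct (Hsur t) as [s Hst].
      exists s, i. rewrite Hst. auto.
    + intros TB t i Hi. apply HB; auto.
  - intros [HA HB]. split.
    + intro TA. destruct (HA TA) as [t [i [Hi Ht]]]. exists (g t), i. auto.
    + intros TB t i Hi. destruct (Hsur t) as [s Hst]. rewrite <- Hst. apply HB; auto.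
Qed.

Definition P2 : problem := mkProblem hold2 hold2_stutter.

Definition PropB (S : point -> Prop) : Prop :=
  exists p q r s, S p /\ S q /\ S r /\ S s /\ d2 p q = 25 * d2 r s /\ d2 r s > 0.

Definition A2 (S : point -> Prop) : point :=
  if excluded_middle_informative (PropB S) then (0,0) else (1,0).

Lemma A2_B S : PropB S -> A2 S = (0,0).
Proof. intro H. unfold A2. destruct (excluded_middle_informative _); [reflexivity|contradiction]. Qed.
Lemma A2_nB S : ~ PropB S -> A2 S = (1,0).
Proof. intro H. unfold A2. destruct (excluded_middle_informative _); [contradiction|reflexivity]. Qed.

Lemma d2_local f x p q :
  d2 (to_local f x p) (to_local f x q) = (fa f ^ 2 + fb f ^ 2) * d2 p q.
Proof.
  destruct f as [a b r Hnz]. unfold d2, to_local, flin, psub; simpl.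
  destruct r; simpl; ring.
Qed.

Lemma frame_pos f : fa f ^ 2 + fb f ^ 2 > 0.
Proof. destruct f as [a b r Hnz]; simpl. destruct Hnz; nra. Qed.

Lemma boundsA (c : config) : typeA c -> forall j k, (j < 4)%nat -> (k < 4)%nat ->
  d2 (c j) (c k) <= 9 /\ (d2 (c j) (c k) > 0 -> d2 (c j) (c k) >= 1).
Proof.
  intros [E0 [E1 [E2 E3]]] j k Hj Hk.
  destruct j as [|[|[|[|j]]]]; try lia; destruct k as [|[|[|[|k]]]]; try lia;
  rewrite ?E0, ?E1, ?E2, ?E3; unfold d2; simpl; split; intros; lra.
Qed.

Lemma dir2_yes : solvable SSYNCH FV team4 P2.
Proof.
  exists A2. intros c0 _ fr act Hact. split.
  - simpl. intro TA. destruct Hact as [Hex _]. destruct (Hex O) as [i [Hi Hai]].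
    exists 1%nat, i. split; [exact Hi|].
    rewrite exec_S, Hai. simpl. rewrite A2_nB; [apply move1|].
    intros [p [q [r [s [Hp [Hq [Hr [Hs [E P]]]]]]]]].
    destruct Hp as [j1 [Hj1 [_ ->]]]; destruct Hq as [j2 [Hj2 [_ ->]]];
    destruct Hr as [j3 [Hj3 [_ ->]]]; destruct Hs as [j4 [Hj4 [_ ->]]].
    simpl in Hj1, Hj2, Hj3, Hj4.
    rewrite d2_local in E; rewrite d2_local in E; rewrite d2_local in P. pose proof (frame_pos (fr i)) as K.
    set (k := fa (fr i) ^ 2 + fb (fr i) ^ 2) in *.
    destruct (boundsA c0 TA j1 j2 Hj1 Hj2) as [B1 _].
    destruct (boundsA c0 TA j3 j4 Hj3 Hj4) as [_ B2].
    assert (D : d2 (c0 j3) (c0 j4) > 0).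
    { destruct (Rle_lt_dec (d2 (c0 j3) (c0 j4)) 0); [|lra]. nra. }
    specialize (B2 D).
    assert (E' : d2 (c0 j1) (c0 j2) = 25 * d2 (c0 j3) (c0 j4)).
    { apply (Rmult_eq_reg_l k). 2: lra. rewrite <- Rmult_assoc, (Rmult_comm k 25), Rmult_assoc. exact E. }
    lra.
  - simpl. intros TB. pose proof TB as [E0 [E1 [E2 E3]]].
    induction t as [|t IH]; intros i Hi; [reflexivity|].
    rewrite exec_S. destruct (act t i); [|apply IH; exact Hi].
    rewrite A2_B; [rewrite stay0; apply IH; exact Hi|].
    set (c := exec FV team4 A2 fr act c0 t).
    exists (to_local (fr i) (c i) (c 0%nat)), (to_local (fr i) (c i) (c 3%nat)),
           (to_local (fr i) (c i) (c 2%nat)), (to_local (fr i) (c i) (c 3%nat)).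
    split; [exists 0%nat; simpl; repeat split; auto; lia|].
    split; [exists 3%nat; simpl; repeat split; auto; lia|].
    split; [exists 2%nat; simpl; repeat split; auto; lia|].
    split; [exists 3%nat; simpl; repeat split; auto; lia|].
    rewrite !d2_local. pose proof (frame_pos (fr i)) as K.
    unfold c. rewrite !IH by lia. rewrite E0, E2, E3. unfold d2; simpl.
    split; nra.
Qed.


Definition cA : config := fun i => match i with
  | O => (0,0) | 1%nat => (1,0) | 2%nat => (2,0) | _ => (3,0) end.
Definition cB : config := fun i => match i with
  | O => (0,0) | 1%nat => (1,0) | 2%nat => (2,0) | _ => (5/2,0) end.

Lemma neg1_neq0 : -1 <> 0. Proof. lra. Qed.
Definition rot : frame := mkFrame (-1) 0 false (or_introl neg1_neq0).
Definition fA (i : nat) : frame := match i with 3%nat => rot | _ => id0 end.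
Definition mB (i : nat) : nat := match i with 1%nat | 2%nat => 1%nat | _ => 0%nat end.

Ltac wit := split; [simpl; lia | split;
  [unfold sees; change (tV team4) with 1; apply dist_le1; unfold d2; simpl; lra
  | unfold to_local, flin, psub; simpl; f_equal; lra]].
Ltac findw := first [exists 0%nat; wit | exists 1%nat; wit | exists 2%nat; wit | exists 3%nat; wit].

Lemma snapEq i : (i < 4)%nat ->
  snapshot LV team4 cA (fA i) i = snapshot LV team4 cB id0 (mB i).
Proof.
  intro Hi. apply functional_extensionality; intro q; apply propositional_extensionality.
  unfold snapshot. split; intros [j [Hj [Hs ->]]]; simpl in Hj;
  unfold sees in Hs; change (tV team4) with 1 in Hs; apply dist_le1 in Hs;
  destruct i as [|[|[|[|i]]]]; try lia;
  destruct j as [|[|[|[|j]]]]; try lia; unfold d2 in Hs; simpl in Hs; try lra; findw.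
Qed.

Lemma vtrans n V c i j k : vreach n V c i j -> vreach n V c j k -> vreach n V c i k.
Proof. intros H1 H2. induction H2; [exact H1|]. eapply vreach_step; eauto. Qed.

Lemma conn4 (c : config) :
  dist (c 0%nat) (c 1%nat) <= 1 -> dist (c 1%nat) (c 2%nat) <= 1 -> dist (c 2%nat) (c 3%nat) <= 1 ->
  dist (c 1%nat) (c 0%nat) <= 1 -> dist (c 2%nat) (c 1%nat) <= 1 -> dist (c 3%nat) (c 2%nat) <= 1 ->
  vis_connected 4 1 c.
Proof.
  intros D01 D12 D23 D10 D21 D32.
  assert (F : forall i, (i < 4)%nat -> vreach 4 1 c 0 i /\ vreach 4 1 c i 0).
  { intros i Hi. assert (R01 : vreach 4 1 c 0 1) by (eapply vreach_step; [apply vreach_refl|lia|exact D01]).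
    assert (R12 : vreach 4 1 c 0 2) by (eapply vreach_step; [exact R01|lia|exact D12]).
    assert (R23 : vreach 4 1 c 0 3) by (eapply vreach_step; [exact R12|lia|exact D23]).
    assert (S32 : vreach 4 1 c 3 2) by (eapply vreach_step; [apply vreach_refl|lia|exact D32]).
    assert (S21 : vreach 4 1 c 2 1) by (eapply vreach_step; [apply vreach_refl|lia|exact D21]).
    assert (S10 : vreach 4 1 c 1 0) by (eapply vreach_step; [apply vreach_refl|lia|exact D10]).
    destruct i as [|[|[|[|i]]]]; try lia; split; try apply vreach_refl; auto;
    eapply vtrans; eauto; eapply vtrans; eauto. }
  intros i j Hi Hj. eapply vtrans; [apply (F i Hi)|apply (F j Hj)].
Qed.

Ltac dd := apply dist_le1; unfold d2; simpl; lra.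

Lemma admA : admissible team4 cA.
Proof.
  split.
  - intros i j Hi Hj E. simpl in Hi, Hj.
    destruct i as [|[|[|[|i]]]]; try lia; destruct j as [|[|[|[|j]]]]; try lia;
      try reflexivity; simpl in E; injection E; lra.
  - apply conn4; dd.
Qed.

Lemma admB : admissible team4 cB.
Proof.
  split.
  - intros i j Hi Hj E. simpl in Hi, Hj.
    destruct i as [|[|[|[|i]]]]; try lia; destruct j as [|[|[|[|j]]]]; try lia;
      try reflexivity; simpl in E; injection E; lra.
  - apply conn4; dd.
Qed.

Lemma id0_stay x d : to_global id0 x d = x -> d = (0,0).
Proof.
  destruct x as [x1 x2], d as [u v]. unfold to_global, padd, flin_inv; simpl.
  intro H; injection H; intros H2 H1.
  assert (Hu : (1 * u + 0 * v) / (1 * (1 * 1) + 0 * (0 * 1)) = u) by field.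
  assert (Hv : (1 * v - 0 * u) / (1 * (1 * 1) + 0 * (0 * 1)) = v) by field.
  f_equal; lra.
Qed.

Lemma dir2_no : ~ solvable FSYNCH LV team4 P2.
Proof.
  intros [A HA].
  assert (Hval : valid_schedule FSYNCH (tn team4) (fun _ _ => true)) by (simpl; intros; reflexivity).
  assert (HB := HA cB admB (fun _ => id0) _ Hval).
  destruct HB as [_ HB]. specialize (HB ltac:(repeat split) 1%nat).
  assert (Z : forall k, (k < 4)%nat -> A (snapshot LV team4 cB id0 k) = (0,0)).
  { intros k Hk. apply (id0_stay (cB k)). specialize (HB k Hk).
    rewrite exec_S in HB. exact HB. }
  assert (HAA := HA cA admA fA _ Hval).
  destruct HAA as [HAA _]. destruct (HAA ltac:(repeat split)) as [t [i [Hi Ht]]].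
  apply Ht. clear Ht HAA. simpl (exec _ _ _ _ _ _ O).
  revert i Hi. induction t as [|t IH]; intros i Hi; [reflexivity|].
  rewrite exec_S.
  assert (Es : snapshot LV team4 (exec LV team4 A fA (fun _ _ => true) cA t) (fA i) i
             = snapshot LV team4 cA (fA i) i).
  { apply functional_extensionality; intro q; apply propositional_extensionality.
    unfold snapshot, sees. rewrite (IH i Hi).
    split; intros [j [Hj [Hs Hq]]]; exists j; simpl in Hj; rewrite (IH j Hj) in *; auto. }
  rewrite Es, snapEq by exact Hi. rewrite Z.
  - rewrite stay0. apply IH; exact Hi.
  - destruct i as [|[|[|[|i]]]]; simpl; lia.
Qed.

Theorem theorem13 : incomparable FSYNCH LV SSYNCH FV.
Proof.
  split.
  - exists team2, P1. split; [exact dir1_yes | exact dir1_no].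
  - exists team4, P2. split; [exact dir2_yes | exact dir2_no].
Qed.
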